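(* For all $M,M'\in\mathcal M$ and $h\in[H]$, $\frac1K\mathcal E_B(M,M',h)\le\mathcal W_F(M,M',h)$.
   Context: Factored MDP setting: $\mathcal O$ finite, $\mathcal X=[H]\times\mathcal O^d$ layered by time, $|\mathcal A|=K$; known parent sets $\mathrm{pa}_i\subseteq[d]$; transitions $P(x'|x,a)=\prod_{i=1}^dP^{(i)}[x'[i]\mid x[\mathrm{pa}_i],a,h]$; known reward $R^\star$ shared by all models, rewards in $[0,1]$ with total reward $\le1$; $\mathcal M$ is the set of all models with reward $R^\star$ and transitions factorizing with these parents, the true model $M^\star\in\mathcal M$. For a model $M$: $V_M,\pi_M$ its optimal value function and greedy optimal policy; $x_h\sim\pi$ the step-$h$ context when running $\pi$ in the true MDP; $(r,x')\sim M_h$ means $r\sim R^\star(x_h,a_h)$, $x'\sim P(x_h,a_h)$. $\mathcal E_B(M,M',h)=\mathbb E_{x_h\sim\pi_M,a_h\sim\pi_{M'}}[\mathbb E_{(r,x')\sim M'_h}[r+V_{M'}(x')]-\mathbb E_{(r,x')\sim M^\star_h}[r+V_{M'}(x')]]$. Test class $\mathcal F=\{g_1+\dots+g_d:g_i\in\mathcal G_i\}$, $\mathcal G_i$ all $\{-1,1\}$-valued functions of $(x,a,r,x')$ depending only on $(x[\mathrm{pa}_i],a,h,x'[i])$. $\mathcal W_F(M,M',h)=\max_{f\in\mathcal F}\mathbb E_{x_h\sim\pi_M,a_h\sim U(\mathcal A)}[\mathbb E_{M'_h}f(x_h,a_h,r,x')-\mathbb E_{M^\star_h}f(x_h,a_h,r,x')]$.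 *)

(* Defs.v *)
From HB Require Import structures.
From mathcomp Require Import all_boot all_order all_algebra.
Set Implicit Arguments. Unset Strict Implicit. Unset Printing Implicit Defensive.
Import Order.TTheory GRing.Theory Num.Theory.
Local Open Scope ring_scope.

Section FactoredMDP.
Variables (R : realFieldType) (O A : finType) (d H : nat).
Variable pa : 'I_d -> {set 'I_d}.

(* observation part x[1..d] of a context; the layer h is carried separately *)
Definition state := {ffun 'I_d -> O}.

(* a model = its transition factors P^(i)[o | x, a, h] (reward R* is shared) *)
Definition model := 'I_d -> nat -> state -> A -> O -> R.
Definition policy := nat -> state -> A.

Definition inModelClass (M : model) : Prop :=
  forall (i : 'I_d) (h : nat) (x : state) (a : A),
    (forall o, 0 <= M i h x a o) /\ (\sum_(o : O) M i h x a o = 1) /\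
    (forall y : state, (forall j, j \in pa i -> x j = y j) ->
       forall o, M i h x a o = M i h y a o).

Definition Ptrans (M : model) (h : nat) (x : state) (a : A) (x' : state) : R :=
  \prod_(i < d) M i h x a (x' i).

Variable Rstar : nat -> state -> A -> R.

(* optimal value function by backward induction; V at layer >= H is 0 *)
Fixpoint Vaux (M : model) (k h : nat) (x : state) : R :=
  match k with
  | 0 => 0
  | k'.+1 => \big[Num.max/0]_(a : A)
      (Rstar h x a + \sum_(x' : state) Ptrans M h x a x' * Vaux M k' h.+1 x')
  end.

Definition Vopt (M : model) (h : nat) (x : state) : R := Vaux M (H - h) h x.

Definition Qopt (M : model) (h : nat) (x : state) (a : A) : R :=
  Rstar h x a + \sum_(x' : state) Ptrans M h x a x' * Vopt M h.+1 x'.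

Definition greedy (M : model) (pi : policy) : Prop :=
  forall h x, (h < H)%N -> Qopt M h x (pi h x) = Vopt M h x.

Variable d0 : state -> R.
Variable Mstar : model.

Fixpoint occ (pi : policy) (h : nat) : state -> R :=
  match h with
  | 0 => d0
  | h'.+1 => fun x' => \sum_(x : state) occ pi h' x * Ptrans Mstar h' x (pi h' x) x'
  end.

Definition bellmanErr (M M' : model) (piM piM' : policy) (h : nat) : R :=
  \sum_(x : state) occ piM h x *
    (let a := piM' h x in
     (Rstar h x a + \sum_(x' : state) Ptrans M' h x a x' * Vopt M' h.+1 x')
   - (Rstar h x a + \sum_(x' : state) Ptrans Mstar h x a x' * Vopt M' h.+1 x')).

(* test class: g_i encoded by its sign pattern, as a function of (h, x, a, x'[i]) *)
Definition testCode := {ffun 'I_d -> {ffun 'I_H * state * A * O -> bool}}.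

Definition sgn (b : bool) : R := if b then 1 else -1.

Definition validCode (g : testCode) : bool :=
  [forall i : 'I_d, forall hh : 'I_H, forall x : state, forall y : state,
     forall a : A, forall o : O,
     [forall j in pa i, x j == y j] ==> (g i (hh, x, a, o) == g i (hh, y, a, o))].

(* f = g_1 + ... + g_d evaluated at (x_h, a_h, r, x') (independent of r) *)
Definition testFun (g : testCode) (h : 'I_H) (x : state) (a : A) (x' : state) : R :=
  \sum_(i < d) sgn (g i (h, x, a, x' i)).

Definition witnessVal (M M' : model) (piM : policy) (h : 'I_H) (g : testCode) : R :=
  \sum_(x : state) occ piM h x *
    ((#|A|%:R)^-1 * \sum_(a : A)
       (\sum_(x' : state) Ptrans M' h x a x' * testFun g h x a x'
      - \sum_(x' : state) Ptrans Mstar h x a x' * testFun g h x a x')).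

Definition constCode : testCode := [ffun _ => [ffun _ => true]].

Definition witnessedErr (M M' : model) (piM : policy) (h : 'I_H) : R :=
  \big[Num.max/witnessVal M M' piM h constCode]_(g : testCode | validCode g)
     witnessVal M M' piM h g.

End FactoredMDP.

(* Main.v *)
Require Import Defs.
From HB Require Import structures.
From mathcomp Require Import all_boot all_order all_algebra.
From mathcomp Require Import ring lra.
Import Order.TTheory GRing.Theory Num.Theory.
Local Open Scope ring_scope.
Set Implicit Arguments. Unset Strict Implicit.

Section Aux.
Variable R : realFieldType.

Lemma marg (O : finType) d (F : 'I_d -> O -> R) (i : 'I_d) :
  (forall j, j != i -> \sum_o F j o = 1) ->
  \sum_(x : {ffun 'I_d -> O}) \prod_j F j (x j) = \sum_o F i o.
Proof.
move=> H1; rewrite -bigA_distr_bigA /=.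
by rewrite (bigD1 i) //= [X in _ * X]big1 ?mulr1 // => j /H1.
Qed.

Definition Gt n (p q : 'I_n -> R) (i j : 'I_n) : R :=
  if (j < i)%N then q j else if (val j == val i) then `|p j - q j| else p j.

Lemma prod_diff n (p q : 'I_n -> R) : (forall j, 0 <= p j) -> (forall j, 0 <= q j) ->
  `|\prod_j p j - \prod_j q j| <= \sum_i \prod_j Gt p q i j.
Proof.
elim: n p q => [|n IH] p q hp hq.
  by rewrite !big_ord0 subrr normr0.
rewrite [\prod_(j < n.+1) p j]big_ord_recr [\prod_(j < n.+1) q j]big_ord_recr [X in _ <= X]big_ord_recr /=.
set P := \prod_(j < n) p _; set Q := \prod_(j < n) q _.
have := IH (fun j => p (widen_ord (leqnSn n) j)) (fun j => q (widen_ord (leqnSn n) j))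
  (fun j => hp _) (fun j => hq _).
rewrite -/P -/Q => IHn.
have e1 : forall i : 'I_n, \prod_(j < n.+1) Gt p q (widen_ord (leqnSn n) i) j =
   (\prod_(j < n) Gt (fun j => p (widen_ord (leqnSn n) j)) (fun j => q (widen_ord (leqnSn n) j)) i j) * p ord_max.
  move=> i; rewrite big_ord_recr /=; congr (_ * _).
  rewrite /Gt /= ltnNge (ltnW (ltn_ord i)) /=.
  by rewrite gtn_eqF.
have e2 : \prod_(j < n.+1) Gt p q ord_max j = Q * `|p ord_max - q ord_max|.
  rewrite big_ord_recr /=; congr (_ * _).
    by apply: eq_bigr => j _; rewrite /Gt /= ltn_ord.
  by rewrite /Gt /= ltnn eqxx.
rewrite e2 (eq_bigr _ (fun i _ => e1 i)) -mulr_suml.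
have hQ : 0 <= Q by apply: prodr_ge0 => j _.
have hpn := hp ord_max.
have -> : P * p ord_max - Q * q ord_max = (P - Q) * p ord_max + Q * (p ord_max - q ord_max) by ring.
apply: (le_trans (ler_normD _ _)).
rewrite !normrM (ger0_norm hQ) (ger0_norm hpn).
apply: lerD => //.
by apply: ler_wpM2r.
Qed.

Section MDP.
Variables (O A : finType) (d H : nat) (pa : 'I_d -> {set 'I_d}).
Variable Rstar : nat -> state O d -> A -> R.

Lemma Ptrans_ge0 (M : model R O A d) h x a x' :
  inModelClass pa M -> 0 <= Ptrans M h x a x'.
Proof. by move=> hM; apply: prodr_ge0 => i _; case: (hM i h x a). Qed.

Lemma Ptrans_sum1 (M : model R O A d) h x a :
  inModelClass pa M -> \sum_x' Ptrans M h x a x' = 1.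
Proof.
move=> hM; rewrite /Ptrans; have := @bigA_distr_bigA R 0 1 *%R +%R _ _ (fun i o => M i h x a o); rewrite /= => <-.
by apply: big1 => i _; case: (hM i h x a) => _ [].
Qed.

Lemma Vaux_ge0 (M : model R O A d) k h x : 0 <= Vaux Rstar M k h x.
Proof. by case: k => [|k] //=; apply: bigmax_ge_id. Qed.

Lemma Vaux_path (M : model R O A d) (a0 : A) :
  inModelClass pa M -> (forall hh x a, 0 <= Rstar hh x a) ->
  forall k h x, exists xs : nat -> state O d, exists as_ : nat -> A,
    Vaux Rstar M k h x <= \sum_(h <= j < h + k) Rstar j (xs j) (as_ j).
Proof.
move=> hM hR; elim=> [|k IH] h x.
  by exists (fun _ => x), (fun _ => a0); rewrite addn0 big_geq.
rewrite /=.
set F := fun a => Rstar h x a + \sum_x' Ptrans M h x a x' * Vaux Rstar M k h.+1 x'.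
case: (@arg_maxP _ _ A a0 xpredT F erefl) => astar _ Hmax.
case: (@arg_maxP _ _ (state O d) x xpredT (Vaux Rstar M k h.+1) erefl) => xstar _ Hx.
have [xs [as_ Hk]] := IH h.+1 xstar.
exists (fun j => if j == h then x else xs j), (fun j => if j == h then astar else as_ j).
rewrite addnS big_ltn ?ltnS ?leq_addr // eqxx.
rewrite -addSn (eq_big_nat _ _ (F2 := fun j => Rstar j (xs j) (as_ j))); last first.
  by move=> j /andP[hj _]; rewrite gtn_eqF.
apply: bigmax_le.
  by apply: addr_ge0 => //; apply: sumr_ge0 => j _.
move=> a _; apply: (le_trans (Hmax a isT)); rewrite /F lerD2l.
apply: (le_trans _ Hk).
apply: (@le_trans _ _ (\sum_x' Ptrans M h x astar x' * Vaux Rstar M k h.+1 xstar)).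
  apply: ler_sum => x' _; apply: ler_wpM2l; first exact: Ptrans_ge0.
  exact: Hx.
by rewrite -mulr_suml Ptrans_sum1 // mul1r.
Qed.

Lemma Vopt_le1 (M : model R O A d) (a0 : A) (h : nat) x :
  inModelClass pa M -> (forall hh x a, 0 <= Rstar hh x a) ->
  (forall (xs : nat -> state O d) (as_ : nat -> A),
      \sum_(hh < H) Rstar hh (xs hh) (as_ hh) <= 1) ->
  (h < H)%N -> Vopt H Rstar M h.+1 x <= 1.
Proof.
move=> hM hR hS hH; rewrite /Vopt.
have [xs [as_ Hk]] := Vaux_path a0 hM hR (H - h.+1) h.+1 x.
apply: (le_trans Hk); rewrite subnKC //.
apply: (le_trans _ (hS xs as_)).
rewrite -(big_mkord xpredT (fun hh => Rstar hh (xs hh) (as_ hh))).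
rewrite [X in _ <= X](big_cat_nat _ (n := h.+1)) //= -[X in X <= _]add0r; apply: lerD => //.
by apply: sumr_ge0.
Qed.


Lemma occ_ge0 (d0 : state O d -> R) (Mstar : model R O A d) (pi : policy O A d) h x :
  (forall x, 0 <= d0 x) -> inModelClass pa Mstar -> 0 <= occ d0 Mstar pi h x.
Proof.
move=> hd hM; elim: h x => [|h IH] x //=.
by apply: sumr_ge0 => y _; apply: mulr_ge0 => //; apply: Ptrans_ge0.
Qed.

Lemma bell_bound (M1 M2 : model R O A d) h x a (V : state O d -> R) :
  inModelClass pa M1 -> inModelClass pa M2 -> (forall x', 0 <= V x' <= 1) ->
  \sum_x' Ptrans M1 h x a x' * V x' - \sum_x' Ptrans M2 h x a x' * V x'
   <= \sum_i \sum_o `|M1 i h x a o - M2 i h x a o|.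
Proof.
move=> h1 h2 hV; rewrite -sumrB.
apply: (@le_trans _ _ (\sum_x' `|Ptrans M1 h x a x' - Ptrans M2 h x a x'|)).
  apply: ler_sum => x' _; rewrite -mulrBl; have /andP[V0 V1] := hV x'.
  apply: (le_trans (ler_norm _)); rewrite normrM (ger0_norm V0).
  by rewrite -[X in _ <= X]mulr1; apply: ler_wpM2l.
apply: (@le_trans _ _ (\sum_(x' : state O d) \sum_i \prod_j Gt (fun j => M1 j h x a (x' j))
           (fun j => M2 j h x a (x' j)) i j)).
  apply: ler_sum => x' _; apply: prod_diff => j.
    by case: (h1 j h x a) => ->.
  by case: (h2 j h x a) => ->.
rewrite exchange_big /=; apply: ler_sum => i _.
rewrite /state (marg (F := fun j o => if (j < i)%N then M2 j h x a o else
   if val j == val i then `|M1 j h x a o - M2 j h x a o| else M1 j h x a o) (i := i)) /=.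
  by rewrite ltnn eqxx.
move=> j hj; case: (j < i)%N.
  by case: (h2 j h x a) => _ [].
rewrite val_eqE (negbTE hj).
by case: (h1 j h x a) => _ [].
Qed.

Lemma tf_marg (M : model R O A d) (g : testCode O A d H) (h : 'I_H) x a :
  inModelClass pa M ->
  \sum_x' Ptrans M h x a x' * testFun R g h x a x' =
  \sum_i \sum_o M i h x a o * sgn R (g i (h, x, a, o)).
Proof.
move=> hM; rewrite /testFun.
under eq_bigr do rewrite mulr_sumr.
rewrite exchange_big /=; apply: eq_bigr => i _.
pose F := fun j o => if j == i then M j h x a o * sgn R (g i (h, x, a, o)) else M j h x a o.
transitivity (\sum_o F i o); last by apply: eq_bigr => o _; rewrite /F eqxx.
rewrite /state -marg; last first.
  move=> j /negbTE hj; rewrite /F hj.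
  by case: (hM j h x a) => _ [].
apply: eq_bigr => x' _; rewrite /Ptrans (bigD1 i) //= [RHS](bigD1 i) //= /F eqxx mulrAC.
congr (_ * _); apply: eq_bigr => j /negbTE hj; by rewrite hj.
Qed.

End MDP.
End Aux.

Theorem mainTheorem11 (R : realFieldType) (O A : finType) (d H : nat)
  (pa : 'I_d -> {set 'I_d})
  (Rstar : nat -> state O d -> A -> R)
  (d0 : state O d -> R)
  (Mstar M M' : model R O A d)
  (piM piM' : policy O A d)
  (h : 'I_H) :
  (forall hh x a, 0 <= Rstar hh x a <= 1) ->
  (forall (xs : nat -> state O d) (as_ : nat -> A),
      \sum_(hh < H) Rstar hh (xs hh) (as_ hh) <= 1) ->
  (forall x, 0 <= d0 x) -> \sum_(x : state O d) d0 x = 1 ->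
  inModelClass pa Mstar -> inModelClass pa M -> inModelClass pa M' ->
  greedy H Rstar M piM -> greedy H Rstar M' piM' ->
  (#|A|%:R)^-1 * bellmanErr H Rstar d0 Mstar M M' piM piM' h
    <= witnessedErr pa d0 Mstar M M' piM h.
Proof.
move=> hR hS hd0 hd1 hMs hM hM' gM gM'.
have hR0 : forall hh x a, 0 <= Rstar hh x a by move=> hh x a; case/andP: (hR hh x a).
pose L x a := \sum_(i < d) \sum_(o : O) `|M' i h x a o - Mstar i h x a o|.
pose gstar : testCode O A d H := [ffun i => [ffun t : 'I_H * state O d * A * O =>
   Mstar i t.1.1.1 t.1.1.2 t.1.2 t.2 <= M' i t.1.1.1 t.1.1.2 t.1.2 t.2]].
have hval : validCode pa gstar.
  apply/forallP => i; apply/forallP => hh; apply/forallP => x; apply/forallP => y.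
  apply/forallP => a; apply/forallP => o; apply/implyP => /forallP Hj.
  rewrite !ffunE /=.
  have Hxy : forall j, j \in pa i -> x j = y j.
    by move=> j hj; have := Hj j; rewrite hj /= => /eqP.
  case: (hMs i hh x a) => _ [_ E1]; case: (hM' i hh x a) => _ [_ E2].
  by rewrite (E1 y Hxy) (E2 y Hxy).
have hW : witnessVal d0 Mstar M M' piM h gstar =
    \sum_x occ d0 Mstar piM h x * ((#|A|%:R)^-1 * \sum_a L x a).
  rewrite /witnessVal; apply: eq_bigr => x _; congr (_ * (_ * _)); apply: eq_bigr => a _.
  rewrite (tf_marg (pa := pa)) // (tf_marg (pa := pa)) // -sumrB; apply: eq_bigr => i _; rewrite -sumrB.
  apply: eq_bigr => o _; rewrite !ffunE /= -mulrBl /sgn.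
  have [hle|hlt] := lerP (Mstar i h x a o) (M' i h x a o).
    by rewrite mulr1.
  by rewrite mulrN1 opprB.
rewrite /witnessedErr; apply: (le_trans _ (le_bigmax_cond _ _ hval)).
rewrite hW /bellmanErr mulr_sumr; apply: ler_sum => x _.
rewrite mulrCA; apply: ler_wpM2l; first exact: occ_ge0.
apply: ler_wpM2l; first by rewrite invr_ge0 ler0n.
rewrite opprD addrACA subrr add0r.
apply: (le_trans (bell_bound (pa := pa) (V := Vopt H Rstar M' h.+1) h x (piM' h x) hM' hMs _)).
  move=> x'; apply/andP; split; first exact: Vaux_ge0.
  by apply: (Vopt_le1 (pa := pa) (piM' h x)) => //; apply: ltn_ord.
rewrite (bigD1 (piM' h x)) //= lerDl.
by apply: sumr_ge0 => a _; apply: sumr_ge0 => i _; apply: sumr_ge0 => o _.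
Qed.
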